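(* Fix a base $\beta\ge2$, let $0<C<1$, and suppose the mantissa length $t$ satisfies $$t\ \ge\ 1+\log_\beta\!\Big[\frac{(1+C)(4+5C)}{C}\sum_{m=1}^{n-1}\sum_{\ell=1}^{n-m}g\big[\mathbf{CP}_\ell(\mathbb{R})\big]\,g\big[\mathbf{CP}_m(\mathbb{R})\big]\Big].$$ Then $G\big[\widehat{\mathbf{CP}}_n(\mathbb{R})\big]\le(1+C)\,g\big[\mathbf{CP}_n(\mathbb{R})\big]$.
   Context: Exact Gaussian elimination without pivoting on $A=(a_{i,j})$: $a^{(1)}_{i,j}=a_{i,j}$, $a^{(k+1)}_{i,j}=a^{(k)}_{i,j}-a^{(k)}_{i,k}a^{(k)}_{k,j}/a^{(k)}_{k,k}$ for $k+1\le i,j\le n$; $g(A)=\max_{i,j,k}|a^{(k)}_{i,j}|/\max_{i,j}|a_{i,j}|$; $\mathbf{CP}_n(\mathbb{R})$ is the set of invertible real $n\times n$ matrices for which this is defined and $|a^{(k)}_{i,j}|\le|a^{(k)}_{k,k}|$ for all $k$, $i,j\ge k$; $g[\mathbf{X}]=\sup_{A\in\mathbf{X}}g(A)$. Floating-point model with base $\beta$, mantissa length $t$, unit roundoff $u=\beta^{1-t}/2$ (overflow/underflow ignored): a floating-point elimination run on a real $n\times n$ matrix $A$ is an array $\hat a^{(k)}_{i,j}$ with $\hat a^{(1)}_{i,j}=a_{i,j}(1+\phi^{(0)}_{i,j})$, $\hat a^{(k+1)}_{i,j}=\big[\hat a^{(k)}_{i,j}-s_{i,k}\hat a^{(k)}_{k,j}(1+\theta^{(k)}_{i,j})\big](1+\phi^{(k)}_{i,j})$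 for $k+1\le i,j\le n$, where $s_{i,k}=\frac{\hat a^{(k)}_{i,k}}{\hat a^{(k)}_{k,k}}(1+\varphi_{i,k})$, for some parameters with $|\theta^{(k)}_{i,j}|,|\phi^{(k)}_{i,j}|,|\varphi_{i,k}|\le u$, and with $|s_{i,k}|\le 1$, $|s_{i,k}(1+\theta^{(k)}_{i,j})|\le1$. $\widehat{\mathbf{CP}}_n(\mathbb{R})$ consists of (invertible real $A$, run) pairs with all $\hat a^{(k)}_{k,k}\ne0$ and $|\hat a^{(k)}_{i,j}|\le|\hat a^{(k)}_{k,k}|$ for all $k$ and $i,j\ge k$. The floating-point growth factor is $G(A)=\max_{i,j,k}|\hat a^{(k)}_{i,j}|/\max_{i,j}|\hat a^{(1)}_{i,j}|$ and $G[\widehat{\mathbf{CP}}_n(\mathbb{R})]$ is its supremum over $\widehat{\mathbf{CP}}_n(\mathbb{R})$. *)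

(* Defs.v *)
From HB Require Import structures.
From mathcomp Require Import all_boot all_order all_algebra.
From mathcomp Require Import all_classical all_reals.
From mathcomp Require Import ereal.
Set Implicit Arguments. Unset Strict Implicit. Unset Printing Implicit Defensive.
Import Order.TTheory GRing.Theory Num.Theory.
Local Open Scope ring_scope.
Local Open Scope classical_set_scope.

(* All indices are 0-based: rows/columns 0..n-1, elimination stages 0..n-1.
   Stage k (0-based) corresponds to the paper's a^{(k+1)}; it is only
   meaningful for entries k <= i,j < n. *)

Section GE.
Variable R : realType.

Definition mxf (n : nat) (A : 'M[R]_n) (i j : nat) : R :=
  match (insub i : option 'I_n), (insub j : option 'I_n) with
  | Some i', Some j' => A i' j'
  | _, _ => 0
  end.

(* exact Gaussian elimination without pivoting: ge A k i j = a^{(k+1)}_{i+1,j+1} *)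
Fixpoint ge (n : nat) (A : 'M[R]_n) (k : nat) : nat -> nat -> R :=
  match k with
  | 0 => mxf A
  | k'.+1 => fun i j =>
      let a := ge A k' in a i j - a i k' * a k' j / a k' k'
  end.

Definition maxstage (n : nat) (f : nat -> nat -> nat -> R) : R :=
  \big[Num.max/0]_(k < n) \big[Num.max/0]_(i < n | (k <= i)%N)
     \big[Num.max/0]_(j < n | (k <= j)%N) `|f k i j|.

Definition maxentry (n : nat) (a : nat -> nat -> R) : R :=
  \big[Num.max/0]_(i < n) \big[Num.max/0]_(j < n) `|a i j|.

Definition growth (n : nat) (A : 'M[R]_n) : R :=
  maxstage n (ge A) / maxentry n (mxf A).

(* CP_n(R): invertible, elimination defined (pivots used as divisors nonzero),
   completely pivoted: |a^{(k)}_{ij}| <= |a^{(k)}_{kk}| *)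
Definition CP (n : nat) (A : 'M[R]_n) : Prop :=
  A \in unitmx /\
  (forall k : nat, (k.+1 < n)%N -> ge A k k k != 0) /\
  (forall k i j : nat, (k <= i < n)%N -> (k <= j < n)%N ->
     `|ge A k i j| <= `|ge A k k k|).

Definition gCP (n : nat) : \bar R :=
  ereal_sup [set (growth A)%:E | A in [set A : 'M[R]_n | CP A]].

Definition unit_roundoff (beta t : nat) : R :=
  (beta%:R : R) ^ (1 - t%:Z) / 2.

Definition fp_mult (ah : nat -> nat -> nat -> R) (vphi : nat -> nat -> R)
  (i k : nat) : R :=
  ah k i k / ah k k k * (1 + vphi i k).

(* ah is a floating-point elimination run on A (base beta, mantissa t):
   ah k i j = \hat a^{(k+1)}_{i+1,j+1}, phi k = \phi^{(k)}, theta k = \theta^{(k+1)},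
   vphi i k = \varphi_{i+1,k+1}. *)
Definition fp_run (beta t n : nat) (A : 'M[R]_n)
  (ah : nat -> nat -> nat -> R) : Prop :=
  exists (theta phi : nat -> nat -> nat -> R) (vphi : nat -> nat -> R),
    let u := unit_roundoff beta t in
    (forall i j : nat, (i < n)%N -> (j < n)%N ->
       ah 0%N i j = mxf A i j * (1 + phi 0%N i j) /\ `|phi 0%N i j| <= u) /\
    (forall k i j : nat, (k.+1 <= i < n)%N -> (k.+1 <= j < n)%N ->
       let s := fp_mult ah vphi i k in
       ah k.+1 i j = (ah k i j - s * ah k k j * (1 + theta k i j))
                       * (1 + phi k.+1 i j) /\
       `|theta k i j| <= u /\ `|phi k.+1 i j| <= u /\ `|vphi i k| <= u /\
       `|s| <= 1 /\ `|s * (1 + theta k i j)| <= 1).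

Definition CPhat (beta t n : nat) (A : 'M[R]_n) (ah : nat -> nat -> nat -> R)
  : Prop :=
  A \in unitmx /\ fp_run beta t A ah /\
  (forall k : nat, (k < n)%N -> ah k k k != 0) /\
  (forall k i j : nat, (k <= i < n)%N -> (k <= j < n)%N ->
     `|ah k i j| <= `|ah k k k|).

Definition fp_growth (n : nat) (ah : nat -> nat -> nat -> R) : R :=
  maxstage n ah / maxentry n (ah 0%N).

Definition GCPhat (beta t n : nat) : \bar R :=
  ereal_sup [set (fp_growth n ah)%:E | ah in
     [set ah | exists A : 'M[R]_n, CPhat beta t A ah]].

End GE.

(* Main.v *)
Require Import Defs.
From HB Require Import structures.
From mathcomp Require Import all_boot all_order all_algebra.
From mathcomp Require Import all_classical all_reals.
From mathcomp Require Import ereal.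
From mathcomp Require Import lra ring zify.
Import Order.TTheory GRing.Theory Num.Theory.
Local Open Scope ring_scope.

Lemma sum_term_le (R : realType) (F : nat -> R) a b i :
  (forall j, (a <= j < b)%N -> 0 <= F j) -> (a <= i < b)%N ->
  F i <= \sum_(a <= j < b) F j.
Proof.
move=> F0 /andP[ai ib].
rewrite (big_cat_nat ai (ltnW ib)) /= (big_ltn ib).
rewrite addrCA lerDl; apply: addr_ge0.
  rewrite big_nat_cond; apply: sumr_ge0 => j /andP[/andP[aj jb] _]; apply: F0.
  by rewrite aj /=; exact: ltn_trans jb ib.
rewrite big_nat_cond; apply: sumr_ge0 => j /andP[/andP[aj jb] _]; apply: F0.
by rewrite jb andbT; exact: leq_trans ai (ltnW aj).
Qed.

Lemma sum_widen (R : realType) (F : nat -> R) a b c :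
  (forall j, 0 <= F j) -> (b <= c)%N ->
  \sum_(a <= j < b) F j <= \sum_(a <= j < c) F j.
Proof.
move=> F0 bc; case: (leqP a b) => ab.
  by rewrite (big_cat_nat ab bc) /= lerDl; apply: sumr_ge0.
by rewrite big_geq ?(ltnW ab) //; apply: sumr_ge0.
Qed.

Lemma esum_term_le (R : realType) (F : nat -> \bar R) a b i :
  (forall j, (a <= j < b)%N -> (0 <= F j)%E) -> (a <= i < b)%N ->
  (F i <= \sum_(a <= j < b) F j)%E.
Proof.
move=> F0 /andP[ai ib].
rewrite (big_cat_nat ai (ltnW ib)) /= (big_ltn ib).
rewrite addeCA; apply: lee_paddr.
  apply: adde_ge0.
  rewrite big_nat_cond; apply: sume_ge0 => j /andP[/andP[aj jb] _]; apply: F0.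
  by rewrite aj /=; exact: ltn_trans jb ib.
rewrite big_nat_cond; apply: sume_ge0 => j /andP[/andP[aj jb] _]; apply: F0.
by rewrite jb andbT; exact: leq_trans ai (ltnW aj).
done.
Qed.

Lemma mxfE {R : realType} {n} (A : 'M[R]_n) {i j} (hi : (i < n)%N) (hj : (j < n)%N) :
  mxf A i j = A (Ordinal hi) (Ordinal hj).
Proof.
rewrite /mxf; case: insubP => [i' _ ei|]; last by rewrite hi.
case: insubP => [j' _ ej|]; last by rewrite hj.
by congr (A _ _); apply: val_inj.
Qed.

Definition run_ok {R : realType} (u : R) (n : nat) (a : nat -> nat -> nat -> R) :=
  (forall k, (k < n)%N -> a k k k != 0) /\
  (forall k i j, (k <= i < n)%N -> (k <= j < n)%N -> `|a k i j| <= `|a k k k|) /\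
  (forall k i j, (k.+1 <= i < n)%N -> (k.+1 <= j < n)%N ->
     `|a k.+1 i j - (a k i j - a k i k * a k k j / a k k k)| <= 5 * u * `|a k k k|).

Ltac fld := field; repeat (apply/andP; split); rewrite ?mulf_neq0 //.

Section Constr.
Variable R : realType.
Variable u : R.
Variable n : nat.
Variable a : nat -> nat -> nat -> R.
Hypothesis u0 : 0 <= u.
Hypothesis n0 : (0 < n)%N.
Hypothesis Hrun : run_ok u n a.

Definition p k := `|a k k k|.
Definition eta k := 5 * u * (\sum_(k <= k' < n.-1) p k') / p k.
Definition eps := \sum_(0 <= k < n.-1) eta k.
Hypothesis Heps : eps < 1.
Definition gam k := 1 - \sum_(0 <= k' < k) eta k'.
Definition lf (i k : nat) : R :=
  if (k < i)%N then gam i * a k i k / (gam k * a k k k) else (i == k)%:R.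
Definition uf (k j : nat) : R := if (k <= j)%N then gam k * a k k j else 0.
Definition Bmx : 'M[R]_n := \matrix_(i < n, j < n) \sum_(k < n) lf i k * uf k j.

Lemma p_ge0 k : 0 <= p k. Proof. exact: normr_ge0. Qed.
Lemma p_gt0 k : (k < n)%N -> 0 < p k.
Proof. by move=> kn; rewrite normr_gt0; case: Hrun => H _; apply: H. Qed.
Lemma eta_ge0 k : 0 <= eta k.
Proof.
rewrite /eta; apply: divr_ge0; last exact: p_ge0.
apply: mulr_ge0; first by apply: mulr_ge0.
by apply: sumr_ge0 => *; apply: p_ge0.
Qed.
Lemma gam_le1 k : gam k <= 1.
Proof. by rewrite /gam lerBlDr lerDl; apply: sumr_ge0 => *; apply: eta_ge0. Qed.
Lemma gam_mono k i : (k <= i)%N -> gam i <= gam k.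
Proof. by move=> ki; rewrite /gam lerD2l lerN2; apply: sum_widen => // *; apply: eta_ge0. Qed.
Lemma gam_S k : gam k.+1 = gam k - eta k.
Proof. by rewrite /gam big_nat_recr //= opprD addrA. Qed.
Lemma gam_ge k : (k < n)%N -> 1 - eps <= gam k.
Proof.
move=> kn; rewrite /gam /eps lerD2l lerN2; apply: sum_widen => //; last by lia.
by move=> *; apply: eta_ge0.
Qed.
Lemma gam_gt0 k : (k < n)%N -> 0 < gam k.
Proof. move=> kn; have := gam_ge k kn; have := Heps; lra. Qed.
Lemma piv_neq0 k : (k < n)%N -> a k k k != 0.
Proof. by case: Hrun => H _; apply: H. Qed.
Lemma uf_neq0 k : (k < n)%N -> uf k k != 0.
Proof. by move=> kn; rewrite /uf leqnn mulf_neq0 ?piv_neq0 ?gt_eqF ?gam_gt0. Qed.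

Lemma geB k i j : (k <= i < n)%N -> (k <= j < n)%N ->
  ge Bmx k i j = \sum_(k <= k' < n) lf i k' * uf k' j.
Proof.
elim: k i j => [|k IH] i j /andP[ki ih] /andP[kj jh].
  by rewrite /= (mxfE _ ih jh) mxE big_mkord.
have kn : (k < n)%N by lia.
have colk : \sum_(k <= k' < n) lf i k' * uf k' k = lf i k * uf k k.
  rewrite (big_ltn kn) big_nat_cond big1 ?addr0 // => k' /andP[/andP[kk' _] _].
  by rewrite /uf leqNgt kk' mulr0.
have rowk : forall j', \sum_(k <= k' < n) lf k k' * uf k' j' = uf k j'.
  move=> j'; rewrite (big_ltn kn) big_nat_cond big1 ?addr0.
    by rewrite /lf ltnn eqxx mul1r.
  move=> k' /andP[/andP[kk' _] _].
  by rewrite /lf ltnNge (ltnW kk') /= eq_sym (gtn_eqF kk') mul0r.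
rewrite /= !IH ?kn ?(ltnW ki) ?(ltnW kj) ?ih ?jh ?leqnn //.
rewrite colk !rowk (big_ltn kn).
have uk := uf_neq0 k kn.
fld.
Qed.

Lemma geB_row k j : (k <= j < n)%N -> ge Bmx k k j = gam k * a k k j.
Proof.
move=> kjn; have kn : (k < n)%N by lia.
rewrite geB; [|lia|lia].
rewrite (big_ltn kn) big_nat_cond big1 ?addr0.
  by rewrite /lf ltnn eqxx mul1r /uf; case/andP: kjn => -> _.
move=> k' /andP[/andP[kk' _] _].
by rewrite /lf ltnNge (ltnW kk') /= eq_sym (gtn_eqF kk') mul0r.
Qed.

Lemma geB_piv k : (k < n)%N -> ge Bmx k k k = gam k * a k k k.
Proof. by move=> kn; rewrite geB_row // leqnn. Qed.

Lemma geB_col k i : (k < i < n)%N -> ge Bmx k i k = gam i * a k i k.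
Proof.
move=> kin; have kn : (k < n)%N by lia.
rewrite geB; [|lia|lia].
rewrite (big_ltn kn) big_nat_cond big1 ?addr0.
  have g0 := lt0r_neq0 (gam_gt0 k kn); have p0 := piv_neq0 k kn.
  rewrite /lf /uf leqnn; case/andP: kin => -> _; by rewrite divfK // mulf_neq0.
move=> k' /andP[/andP[kk' _] _].
by rewrite /uf leqNgt kk' mulr0.
Qed.

Lemma geB_trail i j : (i < n)%N -> (j < n)%N ->
  forall r k, (k + r)%N = minn i j ->
  `|ge Bmx k i j / gam i - a k i j| <= 5 * u * \sum_(k <= k' < minn i j) p k'.
Proof.
move=> ih jh; have gi := lt0r_neq0 (gam_gt0 i ih).
elim=> [|r IH] k.
  rewrite addn0 => ek; rewrite ek big_geq // mulr0.
  case: (leqP i j) => ij.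
    by rewrite geB_row ?ij ?jh // mulrC mulKf // subrr normr0.
  by rewrite geB_col ?ij ?ih // mulrC mulKf // subrr normr0.
move=> e; have km : (k < minn i j)%N by lia.
have kn : (k < n)%N by lia.
have G1 := geB k i j (ltac:(lia)) (ltac:(lia)).
have G2 := geB k.+1 i j (ltac:(lia)) (ltac:(lia)).
have Hk : ge Bmx k i j / gam i = a k i k * a k k j / a k k k + ge Bmx k.+1 i j / gam i.
  rewrite G1 G2 (big_ltn kn); set S := \sum_(_ <= _ < _) _; rewrite /lf /uf.
  have -> : (k < i)%N by lia.
  have -> : (k <= j)%N by lia.
  have g0 := lt0r_neq0 (gam_gt0 k kn); have p0 := piv_neq0 k kn.
  fld.
rewrite Hk (big_ltn km) mulrDr.
have E : a k i k * a k k j / a k k k + ge Bmx k.+1 i j / gam i - a k i j =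
  (ge Bmx k.+1 i j / gam i - a k.+1 i j) +
  (a k.+1 i j - (a k i j - a k i k * a k k j / a k k k)) by ring.
rewrite E; apply: le_trans (ler_normD _ _) _.
rewrite addrC; apply: lerD.
  by case: Hrun => _ [_ H3]; apply: H3; lia.
by apply: IH; lia.
Qed.

Lemma eta_p k : (k < n)%N -> eta k * p k = 5 * u * \sum_(k <= k' < n.-1) p k'.
Proof. by move=> kn; rewrite /eta divfK // lt0r_neq0 // p_gt0. Qed.

Lemma B_bound k i j : (k <= i < n)%N -> (k <= j < n)%N ->
  `|ge Bmx k i j| <= `|ge Bmx k k k|.
Proof.
move=> /andP[ki ih] /andP[kj jh]; have kn : (k < n)%N by lia.
have gk := gam_gt0 k kn; have gi := gam_gt0 i ih.
have R2 : forall i' j', (k <= i' < n)%N -> (k <= j' < n)%N -> `|a k i' j'| <= p k.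
  by move=> i' j' h1 h2; case: Hrun => _ [H _]; apply: H.
rewrite geB_piv // normrM (gtr0_norm gk) -/(p k).
case: (ltngtP k i) => [ki'|ik|<-]; last first.
- rewrite geB_row ?kj ?jh // normrM (gtr0_norm gk).
  apply: ler_wpM2l; first exact: ltW.
  by apply: R2; lia.
- by exfalso; lia.
case: (ltngtP k j) => [kj'|jk|<-]; last first.
- rewrite geB_col ?ki' ?ih // normrM (gtr0_norm gi); apply: ler_pM => //; first exact: ltW.
    by apply: gam_mono; exact: ltnW.
  by apply: R2; lia.
- by exfalso; lia.
have gi0 := lt0r_neq0 gi.
have Tr := geB_trail i j ih jh (minn i j - k) k (ltac:(lia)).
set h := ge Bmx k i j / gam i - a k i j in Tr.
have -> : ge Bmx k i j = gam i * (a k i j + h) by rewrite /h; fld.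
rewrite normrM (gtr0_norm gi).
have Hsum : 5 * u * \sum_(k <= k' < minn i j) p k' <= eta k * p k.
  rewrite eta_p //; apply: ler_wpM2l; first by apply: mulr_ge0.
  by apply: sum_widen; [exact: p_ge0 | lia].
have Hah : `|a k i j + h| <= p k + eta k * p k.
  apply: le_trans (ler_normD _ _) _; apply: lerD; first by apply: R2; lia.
  exact: le_trans Tr Hsum.
have Hg : gam i <= gam k - eta k by rewrite -gam_S; apply: gam_mono.
have e0 := eta_ge0 k; have g1 := gam_le1 k; have pk := p_ge0 k.
apply: le_trans (ler_wpM2l (ltW gi) Hah) _.
apply: le_trans (_ : (gam k - eta k) * (p k + eta k * p k) <= _).
  by apply: ler_wpM2r => //; apply: addr_ge0 => //; apply: mulr_ge0.
have Hx : 0 <= 1 + eta k - gam k by lra.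
have := mulr_ge0 (mulr_ge0 pk e0) Hx; nra.
Qed.

Definition Lm : 'M[R]_n := \matrix_(i < n, k < n) lf i k.
Definition Um : 'M[R]_n := \matrix_(k < n, j < n) uf k j.

Lemma B_unit : Bmx \in unitmx.
Proof.
have -> : Bmx = Lm *m Um.
  by apply/matrixP => i j; rewrite !mxE; apply: eq_bigr => k _; rewrite !mxE.
rewrite unitmxE det_mulmx unitfE mulf_neq0 //.
  rewrite det_trig; last first.
    apply/is_trig_mxP => i j ij; rewrite mxE /lf ltnNge (ltnW ij) /=.
    by rewrite ltn_eqF.
  rewrite big1 ?oner_neq0 // => i _; by rewrite mxE /lf ltnn eqxx.
rewrite -det_tr det_trig; last first.
  apply/is_trig_mxP => i j ij; rewrite !mxE /uf leqNgt ij.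
  done.
apply/prodf_neq0 => i _; rewrite !mxE /uf leqnn mulf_neq0 //.
  by apply: lt0r_neq0; apply: gam_gt0.
exact: piv_neq0.
Qed.

Lemma B_CP : CP Bmx.
Proof.
split; first exact: B_unit.
split; last exact: B_bound.
move=> k kn; rewrite geB_piv ?mulf_neq0 //; try lia.
  by apply: lt0r_neq0; apply: gam_gt0; lia.
by apply: piv_neq0; lia.
Qed.

Lemma bigmax_geP {m : nat} {P : pred 'I_m} {F : 'I_m -> R} (i : 'I_m) {x} :
  P i -> x <= F i -> x <= \big[Num.max/0]_(j < m | P j) F j.
Proof. by move=> Pi h; apply: le_trans h _; apply: le_bigmax_cond. Qed.

Lemma B_growth k : (k < n)%N -> gam k * (p k / p 0%N) <= growth Bmx.
Proof.
move=> kn.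
have p0 := p_gt0 0%N n0.
have gk := gam_gt0 k kn.
have H1 : gam k * p k <= maxstage n (ge Bmx).
  rewrite /maxstage.
  apply: (bigmax_geP (Ordinal kn)) => //=.
  apply: (bigmax_geP (Ordinal kn)) => //=.
  apply: (bigmax_geP (Ordinal kn)) => //=.
  by rewrite geB_piv // normrM (gtr0_norm gk).
have gam0 : gam 0 = 1 by rewrite /gam big_geq // subr0.
have H2 : maxentry n (mxf Bmx) <= p 0%N.
  rewrite /maxentry; apply: bigmax_le => [|i _]; first exact: ltW.
  apply: bigmax_le => [|j _]; first exact: ltW.
  have hi := ltn_ord i; have hj := ltn_ord j.
  have := B_bound 0 i j (ltac:(lia)) (ltac:(lia)).
  by rewrite geB_piv // gam0 mul1r.
have H3 : p 0%N <= maxentry n (mxf Bmx).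
  rewrite /maxentry.
  apply: (bigmax_geP (Ordinal n0)) => //=.
  apply: (bigmax_geP (Ordinal n0)) => //=.
  have E := geB_piv 0 n0; rewrite gam0 mul1r in E; by rewrite /p -E.
rewrite /growth mulrA.
have me0 : 0 < maxentry n (mxf Bmx) by exact: lt_le_trans p0 H3.
have ms0 : 0 <= maxstage n (ge Bmx).
  by apply: le_trans H1; apply: mulr_ge0; [exact: ltW | exact: p_ge0].
apply: (le_trans (y := maxstage n (ge Bmx) / p 0%N)).
  by rewrite ler_pM2r ?invr_gt0.
apply: ler_wpM2l => //.
by rewrite lef_pV2 ?posrE.
Qed.

Lemma constr_main : exists B : 'M[R]_n, CP B /\
  forall k, (k < n)%N -> (1 - eps) * (p k / p 0%N) <= growth B.
Proof.
exists Bmx; split; first exact: B_CP.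
move=> k kn; apply: (le_trans _ (B_growth k kn)).
apply: ler_wpM2r; last exact: gam_ge.
by apply: divr_ge0; apply: p_ge0.
Qed.

End Constr.


Definition W {R : realType} (gv : nat -> R) n :=
  \sum_(0 <= k < n.-1) \sum_(k <= k' < n.-1) gv (k' - k).+1.

Lemma W_mono (R : realType) (gv : nat -> R) m n :
  (forall j, 0 <= gv j) -> (m <= n)%N -> W gv m <= W gv n.
Proof.
move=> g0 mn; rewrite /W.
apply: (le_trans (y := \sum_(0 <= k < m.-1) \sum_(k <= k' < n.-1) gv (k' - k).+1)).
  by apply: ler_sum => k _; apply: sum_widen => //; lia.
apply: sum_widen; last by lia.
by move=> k; apply: sumr_ge0.
Qed.

Lemma run_shift {R : realType} {u : R} {n a} k m :
  run_ok u n a -> (m + k <= n)%N ->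
  run_ok u m (fun s i j => a (s + k)%N (i + k)%N (j + k)%N).
Proof.
move=> [H1 [H2 H3]] mk; split; [|split].
- by move=> s sm; apply: H1; lia.
- by move=> s i j hi hj; apply: H2; lia.
- move=> s i j hi hj; rewrite addSn.
  by apply: H3; lia.
Qed.

Lemma core (R : realType) (u C : R) (gv : nat -> R) :
  0 <= u -> 0 < C -> (forall j, 0 <= gv j) ->
  forall n a, (0 < n)%N -> run_ok u n a ->
  5 * u * (1 + C) * W gv n <= C / (1 + C) ->
  (forall m, (0 < m < n)%N -> gCP R m = (gv m)%:E) ->
  forall k, (k < n)%N -> ((p R a k / p R a 0%N)%:E <= (1 + C)%:E * gCP R n)%E.
Proof.
move=> u0 C0 g0; elim/ltn_ind => n IH a n0 Hrun HW Hg.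
have Hr : forall k k', (k <= k' < n.-1)%N ->
    p R a k' / p R a k <= (1 + C) * gv (k' - k).+1.
  move=> k k' kk'.
  pose m := (k' - k).+1.
  have mn : (m < n)%N by rewrite /m; lia.
  have Hb := run_shift k m Hrun (ltac:(rewrite /m; lia)).
  have HWm : 5 * u * (1 + C) * W gv m <= C / (1 + C).
    apply: le_trans HW; apply: ler_wpM2l; last by apply: W_mono => //; exact: ltnW.
    by apply: mulr_ge0; [lra | lra].
  have Hgm : forall m', (0 < m' < m)%N -> gCP R m' = (gv m')%:E.
    by move=> m' hm; apply: Hg; lia.
  have := IH m mn _ (ltn0Sn _) Hb HWm Hgm (k' - k)%N (ltac:(rewrite /m; lia)).
  rewrite Hg; last by rewrite /m; lia.
  rewrite lee_fin /p /= add0n subnK //; lia.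
have Heps : eps R u n a <= C / (1 + C).
  apply: le_trans HW.
  rewrite /eps /W mulr_sumr; apply: ler_sum_nat => k kn /=.
  rewrite /eta -mulrA -[5 * u * (1 + C) * _]mulrA; apply: ler_wpM2l.
    by apply: mulr_ge0; lra.
  rewrite mulr_suml mulr_sumr; apply: ler_sum_nat => k' kk' /=.
  by apply: Hr; lia.
have Heps1 : eps R u n a < 1.
  apply: le_lt_trans Heps _; rewrite ltr_pdivrMr; lra.
have [B [CPB HB]] := constr_main _ _ _ _ u0 n0 Hrun Heps1.
move=> k kn.
have HgB : ((growth B)%:E <= gCP R n)%E by apply: ereal_sup_ubound; exists B.
have HBk := HB k kn.
have r0 : 0 <= p R a k / p R a 0%N by apply: divr_ge0; apply: normr_ge0.
have Hc : 1 <= (1 + C) * (1 - eps R u n a).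
  have : eps R u n a * (1 + C) <= C by rewrite -ler_pdivlMr; lra.
  lra.
have Hreal : p R a k / p R a 0%N <= (1 + C) * growth B.
  apply: le_trans (_ : (1 + C) * ((1 - eps R u n a) * (p R a k / p R a 0%N)) <= _).
    rewrite mulrA; rewrite -{1}(mul1r (_ / _)); apply: ler_wpM2r => //.
  by apply: ler_wpM2l => //; lra.
apply: le_trans (_ : ((1 + C) * growth B)%:E <= _)%E; first by rewrite lee_fin.
rewrite EFinM; apply: lee_pmul => //.
- by rewrite lee_fin; lra.
- by rewrite lee_fin; apply: le_trans HBk; apply: mulr_ge0 => //; lra.
Qed.

Lemma gCP_ge1 (R : realType) m : (0 < m)%N -> (1%:E <= gCP R m)%E.
Proof.
move=> m0.
pose a := fun (k i j : nat) => ((i == j)%:R : R).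
have Hrun : run_ok (0 : R) m a.
  split; [|split].
  - by move=> k _; rewrite /a eqxx oner_neq0.
  - move=> k i j _ _; rewrite /a eqxx normr1.
    by case: (i == j); rewrite ?normr1 ?normr0.
  - move=> k i j hi hj; rewrite /a.
    have -> : (i == k) = false by apply/eqP; lia.
    by rewrite mul0r mul0r subr0 subrr normr0 mulr0 mul0r.
have He : eps R 0 m a < 1.
  by rewrite /eps big1 ?ltr01 // => k _; rewrite /eta mulr0 !mul0r.
have [B [CPB HB]] := constr_main _ _ _ _ (lexx 0) m0 Hrun He.
have := HB 0%N m0.
have -> : eps R 0 m a = 0 by rewrite /eps big1 // => k _; rewrite /eta mulr0 !mul0r.
rewrite /p /a eqxx normr1 divr1 subr0 mul1r => h1.
apply: le_trans (_ : (growth B)%:E <= _)%E; first by rewrite lee_fin.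
by apply: ereal_sup_ubound; exists B.
Qed.

Lemma err_bound (R : realType) (u x y c d th ph v ak1 : R) :
  0 <= u -> u <= 1/2 -> d != 0 ->
  `|x| <= `|d| -> `|y| <= `|d| ->
  `|th| <= u -> `|ph| <= u -> `|v| <= u ->
  `|c / d * (1 + v)| <= 1 -> `|c / d * (1 + v) * (1 + th)| <= 1 ->
  ak1 = (x - c / d * (1 + v) * y * (1 + th)) * (1 + ph) ->
  `|ak1 - (x - c * y / d)| <= 5 * u * `|d|.
Proof.
move=> u0 u12 d0 hx hy hth hph hv hs hst ->.
set s := c / d * (1 + v).
have hv1 : 1/2 <= `|1 + v|.
  have := ler_normD (1 + v) (- v); rewrite addrK normrN normr1; lra.
have v1 : 1 + v != 0 by rewrite -normr_gt0; lra.
have E : (x - s * y * (1 + th)) * (1 + ph) - (x - c * y / d) =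
   ph * (x - s * (1 + th) * y) - y * s * (th + v / (1 + v)).
  by rewrite /s; fld.
rewrite E; apply: le_trans (ler_normB _ _) _.
have T1 : `|ph * (x - s * (1 + th) * y)| <= u * (2 * `|d|).
  rewrite normrM; apply: ler_pM => //.
  apply: le_trans (ler_normB _ _) _; rewrite normrM.
  have : `|s * (1 + th)| * `|y| <= `|d|.
    rewrite -[X in _ <= X]mul1r; apply: ler_pM => //.
  lra.
have Hw : `|v / (1 + v)| <= 2 * u.
  rewrite normrM normfV ler_pdivrMr; last lra.
  have : 0 <= u * (`|1 + v| - 1/2) by apply: mulr_ge0; lra.
  nra.
have T2 : `|y * s * (th + v / (1 + v))| <= `|d| * (3 * u).
  rewrite normrM normrM; apply: ler_pM => //.
    rewrite -[X in _ <= X]mulr1; apply: ler_pM => //.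
  apply: le_trans (ler_normD _ _) _; lra.
lra.
Qed.

Lemma fp_run_ok (R : realType) beta t n (A : 'M[R]_n) ah :
  ((1 < n)%N -> unit_roundoff R beta t <= 1/2) -> 0 <= unit_roundoff R beta t ->
  CPhat beta t A ah -> run_ok (unit_roundoff R beta t) n ah.
Proof.
move=> hu u0 [_ [[th [ph [vp [_ H1]]]] [Hp Hb]]].
split; [exact: Hp|split; [exact: Hb|]].
move=> k i j hi hj.
have [E [hth [hph [hv [hs hst]]]]] := H1 k i j hi hj.
rewrite /fp_mult in E hs hst.
apply: (@err_bound R _ _ _ _ _ (th k i j) (ph k.+1 i j) (vp i k)) => //.
- by apply: hu; lia.
- by apply: Hp; lia.
- by apply: Hb; lia.
- by apply: Hb; lia.
Qed.

Lemma W_eq (R : realType) (gv : nat -> R) n :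
  W gv n = \sum_(1 <= m < n) \sum_(1 <= l < (n - m).+1) gv l.
Proof.
rewrite /W (big_addn 0 n 1) -subn1.
apply: eq_big_nat => k kn.
rewrite -{1}(add0n k) (big_addn 0 _ k) (big_addn 0 _ 1).
have -> : ((n - 1 - k) = (n - (k + 1)).+1 - 1)%N by lia.
by apply: eq_big_nat => i _; rewrite addnK addn1.
Qed.

Theorem mainTheorem9 (R : realType) (beta t n : nat) (C : R) :
  (2 <= beta)%N -> (0 < n)%N -> 0 < C -> C < 1 ->
  ((((1 + C) * (4 + 5 * C) / C)%:E *
    \sum_(1 <= m < n) \sum_(1 <= l < (n - m).+1) (gCP R l * gCP R m))
   <= ((beta%:R : R) ^ (t%:Z - 1))%:E)%E ->
  (GCPhat R beta t n <= (1 + C)%:E * gCP R n)%E.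
Proof.
move=> b2 n0 C0 C1 Hyp.
set K := (1 + C) * (4 + 5 * C) / C.
have K0 : 0 < K by rewrite /K; apply: divr_gt0 => //; apply: mulr_gt0; lra.
set P := (beta%:R : R) ^ (t%:Z - 1).
have P0 : 0 < P by apply: exprz_gt0; rewrite ltr0n; lia.
pose gv := fun m => Num.max 0 (fine (gCP R m)).
have gv0 : forall j, 0 <= gv j by move=> j; rewrite /gv le_max lexx.
have Hnn : forall l m, (0 < l)%N -> (0 < m)%N -> (0 <= gCP R l * gCP R m)%E.
  move=> l m l0 m0; apply: mule_ge0.
    by apply: (le_trans (y := 1%:E)); [rewrite lee_fin | exact: gCP_ge1].
  by apply: (le_trans (y := 1%:E)); [rewrite lee_fin | exact: gCP_ge1].
have Hfin : forall m, (0 < m < n)%N -> gCP R m = (gv m)%:E.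
  move=> m /andP[m0 mn].
  have g1 := gCP_ge1 R m m0.
  case Eg: (gCP R m) g1 => [r| |] g1.
  - rewrite /gv Eg /=; congr (_%:E); apply/esym/max_idPr.
    by move: g1; rewrite lee_fin; lra.
  - exfalso.
    have Hterm : (gCP R 1 * gCP R m <=
      \sum_(1 <= m0 < n) \sum_(1 <= l < (n - m0).+1) (gCP R l * gCP R m0))%E.
      apply: le_trans (_ : (\sum_(1 <= l < (n - m).+1) (gCP R l * gCP R m) <= _)%E).
        apply: (esum_term_le _ (fun l => (gCP R l * gCP R m)%E) 1 _ 1); last by lia.
        by move=> j hj; apply: Hnn; lia.
      apply: (esum_term_le _ (fun m0 => \sum_(1 <= l < (n - m0).+1) (gCP R l * gCP R m0)%E)); last by lia.
      move=> j hj; rewrite big_nat_cond; apply: sume_ge0 => l /andP[hl _].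
      by apply: Hnn; lia.
    have g11 := gCP_ge1 R 1 (ltn0Sn 0).
    rewrite Eg gt0_muley in Hterm; last by apply: (lt_le_trans _ g11); rewrite lte_fin.
    move: Hterm; rewrite leye_eq => /eqP Es.
    move: Hyp; rewrite Es gt0_muley ?lte_fin //.
  - by move: g1; rewrite leeNy_eq.
set S := \sum_(1 <= m < n) \sum_(1 <= l < (n - m).+1) gv l * gv m.
have HS : K * S <= P.
  have E : (\sum_(1 <= m < n) \sum_(1 <= l < (n - m).+1) (gCP R l * gCP R m))%E = S%:E.
    rewrite /S -sumEFin; apply: eq_big_nat => m hm.
    rewrite -sumEFin; apply: eq_big_nat => l hl.
    by rewrite !Hfin ?EFinM //; lia.
  by move: Hyp; rewrite E -EFinM lee_fin.
have gv1 : forall m, (0 < m < n)%N -> 1 <= gv m.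
  move=> m hm; have := gCP_ge1 R m (ltac:(lia)); rewrite Hfin // lee_fin; done.
have HWS : W gv n <= S.
  rewrite W_eq /S; apply: ler_sum_nat => m hm; apply: ler_sum_nat => l hl.
  rewrite -{1}(mulr1 (gv l)); apply: ler_wpM2l => //.
  by apply: gv1; lia.
have W0 : 0 <= W gv n.
  by rewrite /W; apply: sumr_ge0 => k _; apply: sumr_ge0.
set u := unit_roundoff R beta t.
have uE : u = P^-1 / 2 by rewrite /u /unit_roundoff /P invr_expz opprB.
have u0 : 0 <= u by rewrite uE; apply: divr_ge0 => //; rewrite invr_ge0 ltW.
have uP : u * P = 1 / 2 by rewrite uE mulrAC mulVf ?gt_eqF.
have Hsmall : 5 * u * (1 + C) * W gv n <= C / (1 + C).
  have SP : K * (S * u) <= 1 / 2.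
    rewrite -uP mulrA [u * P]mulrC; apply: ler_wpM2r => //.
  have KC : K * C = (1 + C) * (4 + 5 * C) by rewrite /K divfK // gt_eqF.
  have S0 : 0 <= S * u by apply: mulr_ge0 => //; apply: le_trans HWS.
  have h1 : (1 + C) * (4 + 5 * C) * (S * u) <= C / 2.
    by have := ler_wpM2l (ltW C0) SP; rewrite mulrA [C * K]mulrC KC; lra.
  have h2 : u * W gv n <= S * u by rewrite mulrC; apply: ler_wpM2r.
  rewrite ler_pdivlMr; last lra.
  have h3 : 0 <= (1 + C) * (S * u) by apply: mulr_ge0 => //; lra.
  nra.
have u12 : (1 < n)%N -> u <= 1 / 2.
  move=> n1.
  have S1 : 1 <= S.
    apply: le_trans (_ : gv 1 * gv 1 <= _).
      have := gv1 1 (ltac:(lia)); nra.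
    apply: le_trans (_ : \sum_(1 <= l < (n - 1).+1) gv l * gv 1 <= _).
      apply: (sum_term_le _ (fun l => gv l * gv 1) 1 _ 1); last by lia.
      by move=> j _; apply: mulr_ge0.
    apply: (sum_term_le _ (fun m => \sum_(1 <= l < (n - m).+1) gv l * gv m) 1 _ 1); last by lia.
    by move=> j _; apply: sumr_ge0 => l _; apply: mulr_ge0.
  have K1 : 1 <= K.
    rewrite /K ler_pdivlMr // mul1r; nra.
  have : 1 <= P by nra.
  nra.
have Hcore : forall (A : 'M[R]_n) ah, CPhat beta t A ah -> forall k, (k < n)%N ->
    ((p R ah k / p R ah 0%N)%:E <= (1 + C)%:E * gCP R n)%E.
  move=> A ah HA.
  apply: (core _ _ _ _ u0 C0 gv0 n ah n0 _ Hsmall Hfin).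
  exact: (fp_run_ok _ _ _ _ _ _ u12 u0 HA).
rewrite /GCPhat; apply: ge_ereal_sup => y [ah [A HA] <-].
have Hc := Hcore A ah HA.
case: HA => _ [_ [Hp Hb]].
have p0 : 0 < p R ah 0%N by rewrite /p normr_gt0; apply: Hp.
case Eg: (gCP R n) Hc => [g| |] Hc.
- have Hk : forall k, (k < n)%N -> p R ah k <= (1 + C) * g * p R ah 0%N.
    by move=> k kn; have := Hc k kn; rewrite lee_fin ler_pdivrMr.
  have g0 : 0 <= (1 + C) * g * p R ah 0%N.
    by apply: le_trans (Hk 0%N n0); apply: normr_ge0.
  have cg0 : 0 <= (1 + C) * g.
    by move: g0; rewrite pmulr_lge0.
  have Hms : maxstage n ah <= (1 + C) * g * p R ah 0%N.
    rewrite /maxstage; apply: bigmax_le => // k _.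
    apply: bigmax_le => // i hi; apply: bigmax_le => // j hj.
    apply: le_trans (Hk k (ltn_ord k)); rewrite /p; apply: Hb.
      by rewrite hi ltn_ord.
    by rewrite hj ltn_ord.
  have Hme : p R ah 0%N <= maxentry n (ah 0%N).
    rewrite /maxentry; apply: (bigmax_geP _ (Ordinal n0)) => //=.
    by apply: (bigmax_geP _ (Ordinal n0)) => //=.
  have me0 : 0 < maxentry n (ah 0%N) by apply: lt_le_trans Hme.
  rewrite -EFinM lee_fin /fp_growth ler_pdivrMr //.
  apply: le_trans Hms _; apply: ler_wpM2l => //.
- by rewrite gt0_muley ?lte_fin ?leey //; lra.
- by have := gCP_ge1 R n n0; rewrite Eg leeNy_eq.
Qed.
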